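(* Fix $d\geq 1$. Let ${\boldsymbol{\rho}}=(\rho_1,\dots,\rho_m)$ and ${\boldsymbol{\tau}}=(\tau_1,\dots,\tau_n)$ be contraction vectors (in ${\mathbb R}^d$), and assume that ${\boldsymbol{\rho}}$ is equivalent to ${\boldsymbol{\tau}}$. Then ${\mathcal D}({\boldsymbol{\rho}})\sim{\mathcal D}({\boldsymbol{\tau}})$, i.e. every set $E\in{\mathcal D}({\boldsymbol{\rho}})$ and every set $F\in{\mathcal D}({\boldsymbol{\tau}})$ are Lipschitz equivalent.
   Context: Two compact sets $E,F\subset{\mathbb R}^d$ are Lipschitz equivalent if there is a bijection $f:E\to F$ and a constant $C>0$ with $C^{-1}|x-y|\le|f(x)-f(y)|\le C|x-y|$ for all $x,y\in E$. A contraction vector is ${\boldsymbol{\rho}}=(\rho_1,\dots,\rho_m)$ with each $\rho_j\in(0,1)$ and $\sum_{j=1}^m\rho_j^d<1$. ${\mathcal D}({\boldsymbol{\rho}})$ denotes the set of all dust-like self-similar sets in ${\mathbb R}^d$ that are attractors of some iterated function system $\{\phi_1,\dots,\phi_m\}$ of contracting similarities on ${\mathbb R}^d$, $\phi_j$ having ratio $\rho_j$; dust-like means the sets $\phi_j(K)$, $j=1,\dots,m$, are pairwise disjoint, where $K$ is the attractor (the unique nonempty compact set with $K=\bigcup_j\phi_j(K)$). It is known that any two sets in ${\mathcal D}({\boldsymbol{\rho}})$ are Lipschitz equivalent, and ${\mathcal D}({\boldsymbol{\rho}})\sim{\mathcal D}({\boldsymbol{\tau}})$ means that sets of the two classes are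 Lipschitz equivalent. Let $\Sigma_m$ be the set of infinite words over $\{1,\dots,m\}$ and $\Sigma_m^*$ the set of nonempty finite words; for ${\mathbf i}\in\Sigma_m^*$, $[{\mathbf i}]$ is the set of infinite words beginning with ${\mathbf i}$. A finite set $\{{\mathbf j}_1,\dots,{\mathbf j}_n\}\subset\Sigma_m^*$ is a cut set if the cylinders $[{\mathbf j}_1],\dots,[{\mathbf j}_n]$ are pairwise disjoint with union $\Sigma_m$. For ${\mathbf i}=i_1\cdots i_k$ write ${\boldsymbol{\rho}}_{\mathbf i}=\rho_{i_1}\cdots\rho_{i_k}$. The contraction vector ${\boldsymbol{\tau}}=(\tau_1,\dots,\tau_n)$ is derived from ${\boldsymbol{\rho}}$ if there is a cut set $\{{\mathbf j}_1,\dots,{\mathbf j}_n\}$ of $\Sigma_m$ with ${\boldsymbol{\tau}}=({\boldsymbol{\rho}}_{{\mathbf j}_1},\dots,{\boldsymbol{\rho}}_{{\mathbf j}_n})$. Two contraction vectors ${\boldsymbol{\rho}},{\boldsymbol{\tau}}$ are equivalent if there is a finite sequence ${\boldsymbol{\rho}}={\boldsymbol{\rho}}_1,{\boldsymbol{\rho}}_2,\dots,{\boldsymbol{\rho}}_N={\boldsymbol{\tau}}$ of contraction vectors such that for each $1\le j<N$, ${\boldsymbol{\rho}}_{j+1}$ is derived from ${\boldsymbol{\rho}}_j$ or ${\boldsymbol{\rho}}_j$ is derived from ${\boldsymbol{\rho}}_{j+1}$. *)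

(* Defs.v *)
From HB Require Import structures.
From mathcomp Require Import all_boot all_order all_algebra.
From mathcomp Require Import all_classical all_reals all_analysis.
From Stdlib Require Import Relations.
Set Implicit Arguments. Unset Strict Implicit. Unset Printing Implicit Defensive.
Import Order.TTheory GRing.Theory Num.Theory.
Import numFieldNormedType.Exports.
Local Open Scope classical_set_scope.
Local Open Scope ring_scope.

(* Points of R^d are row vectors 'rV[R]_d; the topology (used for compactness)
   is the standard one of mathcomp-analysis; metric notions (similarity,
   Lipschitz) use the Euclidean distance below. *)
Definition edist {R : realType} {d : nat} (x y : 'rV[R]_d) : R :=
  Num.sqrt (\sum_(i < d) (x ord0 i - y ord0 i) ^+ 2).

Definition contraction_vector {R : realType} (d : nat) (rho : seq R) : Prop :=
  (0 < size rho)%N /\ (forall x, x \in rho -> 0 < x < 1) /\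
  \sum_(x <- rho) x ^+ d < 1.

(* finite words over {0,..,m-1} as seq nat; infinite words as nat -> nat
   with values < m.  w belongs to the cylinder [i] iff i is a prefix of w. *)
Definition in_cylinder (i : seq nat) (w : nat -> nat) : Prop :=
  forall k, (k < size i)%N -> nth 0%N i k = w k.

Definition cut_set (m : nat) (J : seq (seq nat)) : Prop :=
  (forall j, j \in J -> (0 < size j)%N /\ (forall a, a \in j -> (a < m)%N)) /\
  (forall w : nat -> nat, (forall k, (w k < m)%N) ->
     exists! k : nat, (k < size J)%N /\ in_cylinder (nth [::] J k) w).

Definition word_prod {R : realType} (rho : seq R) (i : seq nat) : R :=
  \prod_(a <- i) rho`_a.

Definition derived {R : realType} (rho tau : seq R) : Prop :=
  exists J, cut_set (size rho) J /\ tau = map (word_prod rho) J.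

Definition derived_step {R : realType} (d : nat) (a b : seq R) : Prop :=
  contraction_vector d a /\ contraction_vector d b /\ derived a b.

Definition cv_equiv {R : realType} (d : nat) (rho tau : seq R) : Prop :=
  clos_refl_sym_trans (seq R) (derived_step d) rho tau.

Definition similarity {R : realType} {d : nat} (phi : 'rV[R]_d -> 'rV[R]_d)
  (r : R) : Prop := forall x y, edist (phi x) (phi y) = r * edist x y.

(* K belongs to D(rho): K is the attractor (nonempty compact with
   K = U_j phi_j(K)) of an IFS of similarities with ratios rho_j, and is
   dust-like. *)
Definition in_D {R : realType} {d : nat} (rho : seq R) (K : set 'rV[R]_d) : Prop :=
  exists phi : nat -> ('rV[R]_d -> 'rV[R]_d),
    (forall j, (j < size rho)%N -> similarity (phi j) rho`_j) /\
    K !=set0 /\ compact K /\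
    K = \bigcup_(j in [set j | (j < size rho)%N]) (phi j @` K) /\
    (forall j k, (j < size rho)%N -> (k < size rho)%N -> j <> k ->
       phi j @` K `&` phi k @` K = set0).

Definition lip_equiv {R : realType} {d : nat} (E F : set 'rV[R]_d) : Prop :=
  exists f : 'rV[R]_d -> 'rV[R]_d,
    (forall x, E x -> F (f x)) /\
    (forall x y, E x -> E y -> f x = f y -> x = y) /\
    (forall y, F y -> exists2 x, E x & f x = y) /\
    exists2 C : R, 0 < C &
      forall x y, E x -> E y ->
        C^-1 * edist x y <= edist (f x) (f y) /\
        edist (f x) (f y) <= C * edist x y.

(* Main.v *)
Require Import Defs.
From HB Require Import structures.
From mathcomp Require Import all_boot all_order all_algebra.
From mathcomp Require Import all_classical all_reals all_analysis.
From Stdlib Require Import Relations.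
Set Implicit Arguments. Unset Strict Implicit. Unset Printing Implicit Defensive.
Import Order.TTheory GRing.Theory Num.Theory.
Import numFieldNormedType.Exports.
Local Open Scope classical_set_scope.
Local Open Scope ring_scope.
Local Notation edist := Defs.edist.
Definition valid (m : nat) (u : nat -> nat) := forall k, (u k < m)%N.
Definition agree (u v : nat -> nat) n := forall k, (k < n)%N -> u k = v k.
Definition W {R : realType} (a : seq R) (u : nat -> nat) n : R :=
  \prod_(0 <= k < n) a`_(u k).

Lemma fun_neq (u v : nat -> nat) : u <> v -> exists k, u k <> v k.
Proof.
move=> uv; apply: contrapT => H; apply: uv; apply: funext => k.
by case: (pselect (u k = v k)) => // hk; case: H; exists k.
Qed.

Lemma first_diff (u v : nat -> nat) : (exists k, u k <> v k) ->
  exists n, agree u v n /\ u n <> v n.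
Proof.
move=> ex.
have ex' : exists k, u k != v k by case: ex => k /eqP; exists k.
exists (ex_minn ex'); case: ex_minnP => n /eqP unv mn; split=> // k kn.
apply/eqP; apply/negPn/negP => /mn; rewrite leqNgt kn //.
Qed.

Lemma first_diff_uniq u v n n' : agree u v n -> u n <> v n ->
  agree u v n' -> u n' <> v n' -> n = n'.
Proof.
move=> a1 d1 a2 d2; case: (ltngtP n n') => // h.
- by case: d1; apply: a2.
- by case: d2; apply: a1.
Qed.
Definition metric_prop {R : realType} (a b : seq R) (h : (nat -> nat) -> (nat -> nat)) (C : R) :=
  forall u v n, valid (size a) u -> valid (size a) v ->
    agree u v n -> u n <> v n -> exists n', [/\ agree (h u) (h v) n', h u n' <> h v n',
      C^-1 * W a u n <= W b (h u) n' & W b (h u) n' <= C * W a u n].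

Definition SymEq {R : realType} (a b : seq R) : Prop :=
  exists h : (nat -> nat) -> (nat -> nat),
   [/\ (forall u, valid (size a) u -> valid (size b) (h u)),
       (forall v, valid (size b) v -> exists2 u, valid (size a) u & h u = v) &
       exists2 C : R, 0 < C & metric_prop a b h C].

Lemma metric_inj {R : realType} (a b : seq R) h C : metric_prop a b h C ->
  forall u v, valid (size a) u -> valid (size a) v -> h u = h v -> u = v.
Proof.
move=> mp u v vu vv huv; apply: contrapT => /fun_neq /first_diff [n [ag df]].
by have [n' [_ + _ _]] := mp u v n vu vv ag df; rewrite huv.
Qed.

Lemma SymEq_refl {R : realType} (a : seq R) : SymEq a a.
Proof.
exists id; split => //; first by move=> v vv; exists v.
exists 1 => // u v n _ _ ag df; exists n; split => //; rewrite ?invr1 mul1r //.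
Qed.

Lemma SymEq_trans {R : realType} (a b c : seq R) : SymEq a b -> SymEq b c -> SymEq a c.
Proof.
move=> [h1 [v1 s1 [C1 C10 m1]]] [h2 [v2 s2 [C2 C20 m2]]].
exists (fun u => h2 (h1 u)); split.
- by move=> u /v1 /v2.
- move=> w /s2 [v vv <-]; have [u vu <-] := s1 v vv; by exists u.
exists (C1 * C2); first exact: mulr_gt0.
move=> u v n vu vv ag df.
have [n' [ag' df' l1 u1]] := m1 u v n vu vv ag df.
have [n'' [ag'' df'' l2 u2]] := m2 _ _ n' (v1 _ vu) (v1 _ vv) ag' df'.
exists n''; split => //.
- apply: le_trans l2; rewrite invfM (mulrC C1^-1) -mulrA; apply: ler_wpM2l => //.
  by rewrite invr_ge0 ltW.
- apply: (le_trans u2); rewrite [C1 * C2]mulrC -mulrA; apply: ler_wpM2l => //; exact: ltW.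
Qed.

Lemma SymEq_sym {R : realType} (a b : seq R) : SymEq a b -> SymEq b a.
Proof.
move=> [h [vh sh [C C0 mh]]].
pose k := fun v => match pselect (exists2 u, valid (size a) u & h u = v) with
  | left H => let: exist2 u _ _ := cid2 H in u | right _ => v end.
have kP : forall v, valid (size b) v -> valid (size a) (k v) /\ h (k v) = v.
  move=> v vv; rewrite /k; case: pselect => [H|]; last by move=> H; case: H; exact: sh.
  by case: cid2.
have hinj := metric_inj mh.
exists k; split.
- by move=> v /kP [].
- move=> u vu; exists (h u); first exact: vh.
  have [vk hk] := kP _ (vh _ vu); exact: hinj.
exists C => // v w n vv vw ag df.
have [vkv hkv] := kP _ vv; have [vkw hkw] := kP _ vw.
have : k v <> k w by move=> e; apply: df; rewrite -hkv -hkw e.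
move=> /fun_neq /first_diff [m [agm dfm]].
have [n' [ag' df' l1 u1]] := mh _ _ m vkv vkw agm dfm.
rewrite hkv hkw in ag' df' l1 u1.
have nn := first_diff_uniq ag' df' ag df; subst n'.
exists m; split => //.
- by rewrite ler_pdivrMl // mulrC.
- by rewrite -ler_pdivrMl // mulrC.
Qed.
Lemma prod_bounds {R : realType} (lo : R) (g : nat -> R) k :
  0 <= lo -> (forall i, lo <= g i <= 1) ->
  lo ^+ k <= \prod_(0 <= i < k) g i <= 1.
Proof.
move=> lo0 hg; elim: k => [|k IH]; first by rewrite big_geq // expr0 lexx.
rewrite big_nat_recr //= exprSr; case/andP: IH => l1 u1; have /andP [l2 u2] := hg k.
apply/andP; split.
- apply: ler_pM => //; exact: exprn_ge0.
- have p0 : 0 <= \prod_(0 <= i < k) g i.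
    by apply: prodr_ge0 => i _; have /andP[h _] := hg i; exact: le_trans h.
  apply: (@le_trans _ _ (1 * 1)); last by rewrite mulr1.
  apply: ler_pM => //; exact: le_trans l2.
Qed.

Lemma seq_lower {R : realType} (a : seq R) : (forall x, x \in a -> 0 < x < 1) ->
  exists2 s : R, 0 < s & s <= 1 /\ forall x, x \in a -> s <= x.
Proof.
elim: a => [|x a IH] H; first by exists 1 => //; split.
have [|s s0 [s1 hs]] := IH; first by move=> y ya; apply: H; rewrite inE ya orbT.
have /andP [x0 x1] : 0 < x < 1 by apply: H; rewrite inE eqxx.
exists (Num.min x s); first by rewrite lt_min x0 s0.
split; first by rewrite ge_min s1 orbT.
move=> y; rewrite inE => /orP [/eqP ->|ya]; first by rewrite ge_min lexx.
by rewrite ge_min hs ?orbT.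
Qed.

Lemma seq_upper (J : seq (seq nat)) : exists L, forall j, j \in J -> (size j <= L)%N.
Proof.
elim: J => [|j J [L HL]]; first by exists 0%N.
exists (maxn (size j) L) => i; rewrite inE => /orP [/eqP ->|iJ]; first by rewrite leq_maxl.
by rewrite (leq_trans (HL _ iJ)) // leq_maxr.
Qed.

Lemma pos_interval (f : nat -> nat) : f 0%N = 0%N -> (forall t, (f t < f t.+1)%N) ->
  forall n, exists t, (f t <= n < f t.+1)%N.
Proof.
move=> f0 finc; elim => [|n [t /andP [h1 h2]]].
  by exists 0%N; rewrite f0 leqnn (leq_ltn_trans _ (finc 0%N)) // f0.
case: (ltngtP n.+1 (f t.+1)) => h.
- by exists t; rewrite h andbT (leq_trans h1).
- by move: h; rewrite ltnS leqNgt h2.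
- by exists t.+1; rewrite h leqnn finc.
Qed.

Lemma mono_nat (f : nat -> nat) : (forall t, (f t < f t.+1)%N) ->
  forall s t, (s <= t)%N -> (f s <= f t)%N.
Proof.
move=> finc s t; elim: t => [|t IH]; first by rewrite leqn0 => /eqP ->.
rewrite leq_eqVlt => /orP [/eqP ->//|]; rewrite ltnS => /IH h.
by rewrite (leq_trans h) // ltnW.
Qed.

Section Cut.
Variables (R : realType) (a : seq R) (J : seq (seq nat)).
Hypothesis cutJ : cut_set (size a) J.
Hypothesis apos : forall x, x \in a -> 0 < x < 1.

Definition shift (u : nat -> nat) p := fun k => u (p + k)%N.

Definition idx (u : nat -> nat) : nat :=
  match pselect (exists k, (k < size J)%N /\ in_cylinder (nth [::] J k) u) with
  | left H => proj1_sig (cid H) | right _ => 0%N end.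

Lemma valid_shift u p : valid (size a) u -> valid (size a) (shift u p).
Proof. by move=> vu k; apply: vu. Qed.

Lemma idxP u : valid (size a) u -> (idx u < size J)%N /\ in_cylinder (nth [::] J (idx u)) u.
Proof.
move=> vu; rewrite /idx; case: pselect => [H|H]; first by case: cid.
case: H; have [k [[k1 k2] _]] := cutJ.2 u vu; by exists k.
Qed.

Lemma idx_uniq u k : valid (size a) u -> (k < size J)%N ->
  in_cylinder (nth [::] J k) u -> idx u = k.
Proof.
move=> vu kJ cyl; have [k' [_ U]] := cutJ.2 u vu.
have [i1 i2] := idxP vu.
by rewrite -(U _ (conj kJ cyl)) (U _ (conj i1 i2)).
Qed.

Lemma blen_pos k : (k < size J)%N -> (0 < size (nth [::] J k))%N.
Proof. by move=> kJ; have [] := cutJ.1 _ (mem_nth [::] kJ). Qed.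

Fixpoint pos (u : nat -> nat) (t : nat) : nat :=
  match t with 0%N => 0%N | t.+1 => (pos u t + size (nth [::] J (idx (shift u (pos u t)))))%N end.

Definition hmap (u : nat -> nat) (t : nat) : nat := idx (shift u (pos u t)).

Lemma posS u t : pos u t.+1 = (pos u t + size (nth [::] J (hmap u t)))%N.
Proof. by []. Qed.

Lemma pos_inc u : valid (size a) u -> forall t, (pos u t < pos u t.+1)%N.
Proof.
move=> vu t; rewrite posS -[X in (X < _)%N]addn0 ltn_add2l blen_pos //.
exact: (idxP (valid_shift _ vu)).1.
Qed.

Lemma hmap_valid u : valid (size a) u -> valid (size J) (hmap u).
Proof. by move=> vu t; exact: (idxP (valid_shift _ vu)).1. Qed.

Lemma hmap_cyl u t : valid (size a) u -> in_cylinder (nth [::] J (hmap u t)) (shift u (pos u t)).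
Proof. by move=> vu; exact: (idxP (valid_shift _ vu)).2. Qed.
Definition Fl (v : nat -> nat) t := flatten [seq nth [::] J (v s) | s <- iota 0 t].
Definition gw (v : nat -> nat) k := nth 0%N (Fl v k.+1) k.

Lemma Fl_succ v t : Fl v t.+1 = Fl v t ++ nth [::] J (v t).
Proof. by rewrite /Fl -addn1 iotaD map_cat flatten_cat /= cats0. Qed.

Lemma Fl_size v : valid (size J) v -> forall t, (t <= size (Fl v t))%N.
Proof.
move=> vv; elim => [//|t IH]; rewrite Fl_succ size_cat -addn1 leq_add //.
exact: blen_pos.
Qed.

Lemma Fl_prefix v t t' : (t <= t')%N -> exists r, Fl v t' = Fl v t ++ r.
Proof.
move=> tt; exists (flatten [seq nth [::] J (v s) | s <- iota t (t' - t)]).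
by rewrite /Fl -{1}(subnKC tt) iotaD map_cat flatten_cat.
Qed.

Lemma gw_nth v : valid (size J) v -> forall t k, (k < size (Fl v t))%N ->
  gw v k = nth 0%N (Fl v t) k.
Proof.
move=> vv t k kt; rewrite /gw; case: (leqP t k.+1) => h.
- by have [r ->] := Fl_prefix v h; rewrite nth_cat kt.
- have [r ->] := Fl_prefix v (ltnW h); rewrite nth_cat.
  by rewrite (leq_trans _ (Fl_size vv k.+1)).
Qed.

Lemma gw_valid v : valid (size J) v -> valid (size a) (gw v).
Proof.
move=> vv k; have ks : (k < size (Fl v k.+1))%N := Fl_size vv k.+1.
rewrite /gw; have /flattenP [j /mapP [s _ ->] hj] := mem_nth 0%N ks.
by have [_] := cutJ.1 _ (mem_nth [::] (vv s)); apply.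
Qed.

Lemma hmap_gw v : valid (size J) v -> forall t,
  pos (gw v) t = size (Fl v t) /\ hmap (gw v) t = v t.
Proof.
move=> vv.
have step : forall t, pos (gw v) t = size (Fl v t) -> hmap (gw v) t = v t.
  move=> t pt; rewrite /hmap pt; apply: idx_uniq => //.
  - by apply: valid_shift; exact: gw_valid.
  - move=> k kl; rewrite /shift (gw_nth vv (t := t.+1)).
    + by rewrite Fl_succ nth_cat ltnNge leq_addr /= addKn.
    + by rewrite Fl_succ size_cat ltn_add2l.
elim => [|t [IH1 IH2]]; first by split => //; apply: step.
have e : pos (gw v) t.+1 = size (Fl v t.+1) by rewrite posS IH2 IH1 Fl_succ size_cat.
by split => //; apply: step.
Qed.

Lemma hmap_surj v : valid (size J) v -> exists2 u, valid (size a) u & hmap u = v.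
Proof.
move=> vv; exists (gw v); first exact: gw_valid.
by apply: funext => t; have [] := hmap_gw vv t.
Qed.

Lemma block_step u v s : valid (size a) u -> valid (size a) v ->
  pos u s = pos v s -> agree u v (pos u s.+1) ->
  hmap u s = hmap v s /\ pos u s.+1 = pos v s.+1.
Proof.
move=> vu vv ps ag.
have e : hmap v s = hmap u s.
  rewrite /hmap -ps; apply: idx_uniq.
  - exact: valid_shift.
  - exact: (idxP (valid_shift _ vu)).1.
  - move=> i il; have := hmap_cyl (t := s) vu il; rewrite /shift => ->.
    by apply: ag; rewrite posS ltn_add2l.
by split => //; rewrite !posS e ps.
Qed.

Lemma agree_blocks u v n t : valid (size a) u -> valid (size a) v ->
  agree u v n -> (pos u t <= n)%N -> forall s, (s <= t)%N ->
  pos u s = pos v s /\ ((s < t)%N -> hmap u s = hmap v s).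
Proof.
move=> vu vv ag pt.
have agp : forall s, (s < t)%N -> agree u v (pos u s.+1).
  move=> s st k kl; apply: ag; apply: (leq_trans kl); apply: leq_trans pt.
  exact: mono_nat (pos_inc vu) _ _ st.
elim => [|s IH] st.
  split => // t0; have [] := @block_step u v 0 vu vv erefl (agp _ t0) => //.
have [IH1 _] := IH (ltnW st).
have [_ e] := block_step vu vv IH1 (agp _ st).
split => // st'.
by have [] := block_step vu vv e (agp _ st').
Qed.

Lemma W_ge0 u n : valid (size a) u -> 0 <= W a u n.
Proof.
move=> vu; apply: prodr_ge0 => i _.
by have /andP [h _] := apos (mem_nth 0 (vu i)); exact: ltW.
Qed.

Lemma W_blocks u t : valid (size a) u ->
  W (map (word_prod a) J) (hmap u) t = W a u (pos u t).
Proof.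
move=> vu; elim: t => [|t IH]; first by rewrite /W !big_geq.
rewrite /W big_nat_recr //= -/(W _ _ _) IH -/(hmap u t) /W.
rewrite [RHS](big_cat_nat _ (n := pos u t)) //= ?leq_addr //; congr (_ * _).
rewrite (nth_map [::]); last exact: hmap_valid.
rewrite -{1}(add0n (pos u t)) big_addn addKn /word_prod (big_nth 0%N).
apply: eq_big_nat => i /andP [_ il].
by rewrite (hmap_cyl (t := t) vu il) /shift addnC.
Qed.

Lemma derived_metric : exists2 C : R, 0 < C &
  metric_prop a (map (word_prod a) J) hmap C.
Proof.
have [s s0 [s1 hs]] := seq_lower apos.
have [L HL] := seq_upper J.
have sL0 : 0 < s ^+ L by apply: exprn_gt0.
exists (s ^+ L)^-1; first by rewrite invr_gt0.
move=> u v n vu vv ag df.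
have [t /andP [t1 t2]] := pos_interval (f := pos u) erefl (pos_inc vu) n.
have AB := agree_blocks vu vv ag t1.
have [pe _] := AB t (leqnn t).
have Ws : W a u n = W a u (pos u t) * \prod_(0 <= i < n - pos u t) a`_(u (i + pos u t)).
  by rewrite /W [LHS](big_cat_nat _ (n := pos u t)) //= -{2}(add0n (pos u t)) big_addn.
have hb : forall i, s <= a`_(u (i + pos u t)) <= 1.
  move=> i; have := apos (mem_nth 0 (vu (i + pos u t))) => /andP [_ h1].
  by rewrite hs ?mem_nth // ltW.
have [pl pu] := andP (prod_bounds (n - pos u t) (ltW s0) hb).
have Le : (n - pos u t <= L)%N.
  move: t2; rewrite posS -ltn_subLR // => h; apply: ltnW; apply: (leq_trans h).
  apply: HL; apply: mem_nth; exact: hmap_valid.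
have sLp : s ^+ L <= s ^+ (n - pos u t) by apply: ler_wiXn2l => //; exact: ltW.
have W0 := W_ge0 (pos u t) vu.
exists t; split.
- by move=> k kt; have [_ ] := AB k (ltnW kt); apply.
- move=> e; apply: df.
  have cu := hmap_cyl (t := t) vu; have cv := hmap_cyl (t := t) vv; rewrite -e -pe in cv.
  move: t2; rewrite posS => t2.
  have il : (n - pos u t < size (nth [::] J (hmap u t)))%N by rewrite ltn_subLR.
  have := cu _ il; have := cv _ il; rewrite /shift subnKC // => <- //.
- rewrite W_blocks // Ws.
  rewrite invrK; apply: (@le_trans _ _ (1 * (W a u (pos u t) * 1))); last by rewrite mul1r mulr1.
  apply: ler_pM; first exact: ltW.
  * by apply: mulr_ge0 => //; apply: le_trans pl; apply: exprn_ge0; exact: ltW.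
  * by apply: exprn_ile1 => //; exact: ltW.
  * by apply: ler_wpM2l.
- rewrite W_blocks // Ws.
  rewrite ler_pdivlMl // mulrC; apply: ler_wpM2l => //; exact: le_trans pl.
Qed.
End Cut.

Lemma derived_SymEq {R : realType} (d : nat) (a b : seq R) :
  contraction_vector d a -> derived a b -> SymEq a b.
Proof.
move=> [_ [apos _]] [J [cutJ ->]].
exists (hmap J); split; rewrite ?size_map.
- by move=> u; apply: hmap_valid.
- by move=> v; apply: hmap_surj.
- exact: derived_metric.
Qed.

Lemma cv_equiv_SymEq {R : realType} (d : nat) (a b : seq R) :
  cv_equiv d a b -> SymEq a b.
Proof.
elim => [x y [cx [_ dxy]]|x|x y _ IH|x y z _ IH1 _ IH2].
- exact: derived_SymEq cx dxy.
- exact: SymEq_refl.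
- exact: SymEq_sym.
- exact: SymEq_trans IH1 IH2.
Qed.
Section Norms.
Variables (R : realType) (d : nat).
Implicit Types x y : 'rV[R]_d.

Lemma edist_ge0 x y : 0 <= edist x y.
Proof. exact: sqrtr_ge0. Qed.

Lemma entry_le_edist x y (i : 'I_d) : `|x ord0 i - y ord0 i| <= edist x y.
Proof.
rewrite /edist -sqrtr_sqr; apply: ler_wsqrtr.
rewrite (bigD1 i) //= -[X in X <= _]addr0 lerD2l sumr_ge0 // => j _.
exact: sqr_ge0.
Qed.

Lemma norm_le_edist x y : `|x - y| <= edist x y.
Proof.
rewrite [X in X <= _]mx_normrE; apply: bigmax_le; first exact: edist_ge0.
move=> [i j] _ /=; rewrite !mxE (ord1 i); exact: entry_le_edist.
Qed.

Lemma entry_le_norm x (i : 'I_d) : `|x ord0 i| <= `|x|.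
Proof.
rewrite [X in _ <= X]mx_normrE; exact: (le_bigmax _ _ (ord0, i)).
Qed.

Lemma edist_le_norm x y : edist x y <= d%:R * `|x - y|.
Proof.
rewrite /edist; have n0 : 0 <= d%:R * `|x - y| by rewrite mulr_ge0.
rewrite -(ger0_norm n0) -sqrtr_sqr; apply: ler_wsqrtr.
apply: (@le_trans _ _ (\sum_(i < d) `|x - y| ^+ 2)).
  apply: ler_sum => i _; rewrite -real_normK ?num_real //.
  apply: lerXn2r; rewrite ?nnegrE //.
  by have := entry_le_norm (x - y) i; rewrite !mxE.
rewrite sumr_const card_ord -(mulr_natl (`|x - y| ^+ 2) d) exprMn.
apply: ler_pM => //.
case: (d) => [|n]; first by rewrite expr0n.
by rewrite expr2 ler_peMr // ler1n.
Qed.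

Lemma edist_eq0 x y : edist x y = 0 -> x = y.
Proof.
move=> e; apply/eqP; rewrite -subr_eq0 -normr_eq0 eq_le normr_ge0 andbT.
by rewrite -e norm_le_edist.
Qed.

Lemma edistxx x : edist x x = 0.
Proof. by rewrite /edist big1 ?sqrtr0 // => i _; rewrite subrr expr0n. Qed.

Lemma sim_cont (f : 'rV[R]_d -> 'rV[R]_d) r : similarity f r -> continuous f.
Proof.
move=> sf x; apply/(@cvgrPdist_lt _ _ _ _ (nbhs_filter x)) => e e0.
have k0 : 0 < (`|r| + 1) * (d%:R + 1) by rewrite mulr_gt0 // ltr_wpDl.
near=> y.
apply: (le_lt_trans (norm_le_edist _ _)); rewrite sf.
apply: (@le_lt_trans _ _ ((`|r| + 1) * (d%:R + 1) * `|x - y|)).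
  rewrite -mulrA; apply: (le_trans (ler_norm _)); rewrite normrM.
  apply: ler_pM => //; first by rewrite lerDl.
  rewrite ger0_norm ?edist_ge0 //; apply: (le_trans (edist_le_norm _ _)).
  by apply: ler_wpM2r => //; rewrite lerDl.
rewrite -ltr_pdivlMl //; near: y.
apply: cvgr_dist_lt => //; by rewrite mulr_gt0 ?invr_gt0.
Unshelve. all: by end_near. Qed.
End Norms.
Lemma compact_gap {R : realType} {d : nat} (A B : set 'rV[R]_d) :
  compact A -> compact B -> A `&` B = set0 ->
  exists2 e : R, 0 < e & forall x y, A x -> B y -> e <= `|x - y|.
Proof.
move=> cA cB AB.
have clB : closed B := compact_closed (@norm_hausdorff _ _) cB.
have H : \forall e \near (0 : R)^'+, A `<=` (fun x => forall y, B y -> e < `|x - y|).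
  apply: ((compact_near_coveringP A).1 cA R (0 : R)^'+
   (fun e x => forall y, B y -> e < `|x - y|)) => x Ax.
  have nB : (~` B) x by move=> Bx; have : (A `&` B) x by []; rewrite AB.
  have : nbhs x (~` B) by rewrite -openC in clB; apply: open_nbhs_nbhs.
  move=> /nbhs_ballP [r /= r0 rB].
  exists (ball x (r / 2), [set e | e < r / 2]).
    split; first by apply/nbhs_ballP; exists (r / 2) => //; exact: divr_gt0.
    by apply: nbhs_right_lt; exact: divr_gt0.
  move=> [x' e] /= [bx' er] y By.
  have ry : r <= `|x - y|.
    rewrite leNgt; apply/negP => hy; apply: (rB y) => //.
    by rewrite -ball_normE /=.
  move: bx'; rewrite -ball_normE /= => bx'.
  apply: (lt_le_trans er); rewrite -(lerD2r (r / 2)) -splitr.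
  apply: (le_trans ry); have -> : x - y = (x - x') + (x' - y) by rewrite addrA subrK.
  apply: (le_trans (ler_normD _ _)); rewrite addrC lerD2l; exact: ltW.
have [e [e0 He]] := filter_ex (filterI (nbhs_right_gt (0 : R)) H).
exists e => // x y Ax By; exact: ltW (He x Ax y By).
Qed.
Lemma finite_min {R : realType} (P : nat -> R -> Prop) n :
  (forall i e e', P i e -> 0 < e' -> e' <= e -> P i e') ->
  (forall i, (i < n)%N -> exists2 e, 0 < e & P i e) ->
  exists2 e, 0 < e & forall i, (i < n)%N -> P i e.
Proof.
move=> mono; elim: n => [|n IH] H; first by exists 1.
have [e1 e10 h1] := IH (fun i il => H i (ltnW il)).
have [e2 e20 h2] := H n (ltnSn n).
exists (Num.min e1 e2); first by rewrite lt_min e10 e20.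
move=> i; rewrite ltnS leq_eqVlt => /orP [/eqP ->|il].
- by apply: mono h2 _ _; rewrite ?lt_min ?e10 ?e20 // ge_min lexx orbT.
- by apply: mono (h1 _ il) _ _; rewrite ?lt_min ?e10 ?e20 // ge_min lexx.
Qed.

Lemma seq_upper_r {R : realType} (a : seq R) : (forall x, x \in a -> 0 < x < 1) ->
  exists r : R, [/\ 0 <= r, r < 1 & forall x, x \in a -> x <= r].
Proof.
elim: a => [|x a IH] H; first by exists 0.
have [|r [r0 r1 hr]] := IH; first by move=> y ya; apply: H; rewrite inE ya orbT.
have /andP [x0 x1] : 0 < x < 1 by apply: H; rewrite inE eqxx.
exists (Num.max x r); split; first by rewrite le_max r0 orbT.
  by rewrite gt_max x1 r1.
move=> y; rewrite inE => /orP [/eqP ->|ya]; first by rewrite le_max lexx.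
by rewrite le_max hr ?orbT.
Qed.

Lemma small_pow {R : realType} (r e : R) : 0 <= r -> r < 1 -> 0 < e ->
  exists n, r ^+ n < e.
Proof.
move=> r0 r1 e0.
have hr : `|r| < 1 by rewrite ger0_norm.
have [n Hn] := filter_ex (@cvgr_dist_lt _ _ _ _ _ _ _ (cvg_expr hr) _ e0).
exists n; move: Hn; rewrite sub0r normrN ger0_norm //; exact: exprn_ge0.
Qed.

Section Geo.
Variables (R : realType) (d : nat) (a : seq R) (E : set 'rV[R]_d)
  (phi : nat -> 'rV[R]_d -> 'rV[R]_d).
Hypotheses (apos : forall x, x \in a -> 0 < x < 1)
  (hsim : forall j, (j < size a)%N -> similarity (phi j) a`_j)
  (E0 : E !=set0) (Ec : compact E)
  (EU : E = \bigcup_(j in [set j | (j < size a)%N]) (phi j @` E))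
  (Edis : forall j k, (j < size a)%N -> (k < size a)%N -> j <> k ->
       phi j @` E `&` phi k @` E = set0).

Lemma phiE j x : (j < size a)%N -> E x -> E (phi j x).
Proof. by move=> jm Ex; rewrite EU; exists j => //; exists x. Qed.

Lemma Ecover x : E x -> exists j, (j < size a)%N /\ exists2 z, E z & phi j z = x.
Proof. by rewrite {1}EU => -[j jm [z Ez <-]]; exists j; split => //; exists z. Qed.

Fixpoint comp (u : nat -> nat) n x := match n with 0%N => x | n.+1 => comp u n (phi (u n) x) end.

Lemma comp_sim u n : valid (size a) u -> similarity (comp u n) (W a u n).
Proof.
move=> vu; elim: n => [|n IH] x y /=; first by rewrite /W big_geq // mul1r.
by rewrite IH (hsim (vu n)) /W big_nat_recr //= mulrA.
Qed.

Lemma comp_E u n x : valid (size a) u -> E x -> E (comp u n x).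
Proof.
move=> vu; elim: n x => [//|n IH] x Ex /=; apply: IH; exact: phiE.
Qed.

Lemma comp_agree u v n : agree u v n -> forall x, comp u n x = comp v n x.
Proof.
elim: n => [//|n IH] ag x /=.
rewrite (ag n (ltnSn n)) IH // => k kn; apply: ag; exact: ltnW.
Qed.

Lemma comp_split u i k x : comp u (i + k) x = comp u i (comp (shift u i) k x).
Proof.
elim: k x => [|k IH] x; first by rewrite addn0.
by rewrite addnS /= IH.
Qed.

Lemma comp_nested u i n y : valid (size a) u -> (i <= n)%N -> E y ->
  exists2 z, E z & comp u n y = comp u i z.
Proof.
move=> vu inn Ey; exists (comp (shift u i) (n - i) y).
  by apply: comp_E => //; exact: valid_shift.
by rewrite -comp_split subnKC.
Qed.

Lemma Ebound : exists2 M : R, 0 < M & forall x y, E x -> E y -> edist x y <= M.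
Proof.
have [M0 [_ HM]] := compact_bounded Ec.
have HM' : forall x, E x -> `|x| <= `|M0| + 1.
  by move=> x Ex; apply: (HM (`|M0| + 1)) => //; rewrite (le_lt_trans (ler_norm _)) // ltrDl.
exists (d%:R * (2 * (`|M0| + 1)) + 1).
  by rewrite ltr_wpDl // mulr_ge0 // mulr_ge0.
move=> x y Ex Ey; apply: (le_trans (edist_le_norm _ _)).
apply: ler_wpDr => //; apply: ler_wpM2l => //.
apply: (le_trans (ler_normB _ _)); rewrite mulr2n mulrDl mul1r.
by apply: lerD; apply: HM'.
Qed.
Lemma piece_compact j : (j < size a)%N -> compact (phi j @` E).
Proof.
move=> jm; apply: continuous_compact => //.
exact: continuous_subspaceT (sim_cont (hsim jm)).
Qed.

Lemma Egap : exists2 del : R, 0 < del & forall j k x y, (j < size a)%N -> (k < size a)%N ->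
  j <> k -> E x -> E y -> del <= edist (phi j x) (phi k y).
Proof.
pose P := fun j e => forall k x y, (k < size a)%N ->
  j <> k -> E x -> E y -> e <= edist (phi j x) (phi k y).
have [del del0 H] : exists2 e : R, 0 < e & forall j, (j < size a)%N -> P j e.
  apply: finite_min.
  - move=> i e e' h e'0 le k x y km ik Ex Ey; exact: le_trans le (h k x y km ik Ex Ey).
  move=> j jm.
  pose Q := fun k e => forall x y, j <> k -> E x -> E y -> e <= edist (phi j x) (phi k y).
  have [e e0 He] : exists2 e : R, 0 < e & forall k, (k < size a)%N -> Q k e.
    apply: finite_min.
    + move=> i e e' h e'0 le x y ik Ex Ey; exact: le_trans le (h x y ik Ex Ey).
    move=> k km; case: (pselect (j = k)) => [<-|jk].
      by exists 1 => // x y.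
    have [e e0 He] := compact_gap (piece_compact jm) (piece_compact km) (Edis jm km jk).
    exists e => // x y _ Ex Ey; apply: (le_trans _ (norm_le_edist _ _)).
    by apply: He; [exists x|exists y].
  by exists e => // k x y km jk Ex Ey; apply: He.
by exists del => // j k x y jm km jk Ex Ey; apply: H.
Qed.

Lemma pi_exists u : valid (size a) u ->
  exists p, E p /\ forall n, exists2 z, E z & comp u n z = p.
Proof.
move=> vu; have := Ec; rewrite compact_In0 => /(_ nat setT (fun n => E `&` (comp u n @` E))).
case.
- exists (fun n => comp u n @` E) => // n _.
  apply: compact_closed; first exact: norm_hausdorff.
  apply: continuous_compact => //.
  exact: continuous_subspaceT (sim_cont (comp_sim n vu)).
- move=> D' _; have [x0 Ex0] := E0.
  exists (comp u (\max_(i <- finmap.enum_fset D') i) x0) => i /= iD; split; first exact: comp_E.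
  have hle : (i <= \max_(i <- finmap.enum_fset D') i)%N := @leq_bigmax_seq _ (finmap.enum_fset D') xpredT id i iD erefl.
  have [z Ez ->] := comp_nested vu hle Ex0.
  by exists z.
- move=> p Hp; exists p; split; first by have [] := Hp 0%N I.
  by move=> n; have [_ [z Ez <-]] := Hp n I; exists z.
Qed.

Definition pi (u : nat -> nat) : 'rV[R]_d :=
  match pselect (exists p, E p /\ forall n, exists2 z, E z & comp u n z = p) with
  | left H => proj1_sig (cid H) | right _ => 0 end.

Lemma pi_spec u : valid (size a) u ->
  E (pi u) /\ forall n, exists2 z, E z & comp u n z = pi u.
Proof.
move=> vu; rewrite /pi; case: pselect => [H|]; first by case: cid.
by move=> H; case: H; exact: pi_exists.
Qed.

Definition step (y : 'rV[R]_d) : nat * 'rV[R]_d :=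
  match pselect (exists jz : nat * 'rV[R]_d, [/\ (jz.1 < size a)%N, E jz.2 & phi jz.1 jz.2 = y]) with
  | left H => proj1_sig (cid H) | right _ => (0%N, y) end.

Lemma step_spec y : E y -> [/\ ((step y).1 < size a)%N, E (step y).2 & phi (step y).1 (step y).2 = y].
Proof.
move=> Ey; rewrite /step; case: pselect => [H|]; first by case: cid.
move=> H; case: H; have [j [jm [z Ez e]]] := Ecover Ey; by exists (j, z).
Qed.

Fixpoint xs (x : 'rV[R]_d) k := match k with 0%N => x | k.+1 => (step (xs x k)).2 end.
Definition addr x k := (step (xs x k)).1.

Lemma xs_spec x : E x -> forall k, E (xs x k) /\ comp (addr x) k (xs x k) = x.
Proof.
move=> Ex; elim => [//|k [Ek ck]].
have [s1 s2 s3] := step_spec Ek.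
split => //=; by rewrite /addr -/(addr x k) s3.
Qed.

Lemma addr_valid x : E x -> valid (size a) (addr x).
Proof. by move=> Ex k; have [Ek _] := xs_spec Ex k; have [] := step_spec Ek. Qed.

Lemma geo_coding : exists pi : (nat -> nat) -> 'rV[R]_d,
  [/\ forall u, valid (size a) u -> E (pi u),
      forall x, E x -> exists2 u, valid (size a) u & pi u = x &
      exists2 c1 : R, 0 < c1 & exists2 c2 : R, 0 < c2 &
      forall u v n, valid (size a) u -> valid (size a) v -> agree u v n ->
        edist (pi u) (pi v) <= c2 * W a u n /\
        (u n <> v n -> c1 * W a u n <= edist (pi u) (pi v))].
Proof.
have [M M0 HM] := Ebound.
have [del del0 Hdel] := Egap.
have Wge0 : forall u n, valid (size a) u -> 0 <= W a u n.
  move=> u n vu; apply: prodr_ge0 => i _.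
  by have /andP [h _] := apos (mem_nth 0 (vu i)); exact: ltW.
have upper : forall u v n, valid (size a) u -> valid (size a) v -> agree u v n ->
    edist (pi u) (pi v) <= M * W a u n.
  move=> u v n vu vv ag.
  have [_ /(_ n) [z Ez <-]] := pi_spec vu; have [_ /(_ n) [z' Ez' <-]] := pi_spec vv.
  rewrite -(comp_agree ag z').
  rewrite comp_sim // mulrC; apply: ler_wpM2r; first exact: Wge0.
  exact: HM.
exists pi; split.
- by move=> u /pi_spec [].
- move=> x Ex; exists (addr x); first exact: addr_valid.
  have vu := addr_valid Ex.
  have [r [r0 r1 hr]] := seq_upper_r apos.
  have Wr : forall n, W a (addr x) n <= r ^+ n.
    elim => [|n IH]; first by rewrite /W big_geq.
    rewrite /W big_nat_recr //= exprSr; apply: ler_pM => //; first exact: Wge0.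
    - by have /andP [h _] := apos (mem_nth 0 (vu n)); exact: ltW.
    - by apply: hr; exact: mem_nth.
  have Dn : forall n, edist (pi (addr x)) x <= M * r ^+ n.
    move=> n; have [_ /(_ n) [z Ez <-]] := pi_spec vu.
    have [Ek ck] := xs_spec Ex n; rewrite -[X in edist _ X]ck comp_sim // mulrC.
    apply: ler_pM; [exact: edist_ge0 | exact: Wge0 | exact: HM | exact: Wr].
  apply: edist_eq0; apply/eqP; rewrite eq_le edist_ge0 andbT.
  rewrite leNgt; apply/negP => D0.
  have [n Hn] := small_pow r0 r1 (divr_gt0 D0 M0).
  have := Dn n; rewrite -ler_pdivrMl // => h.
  by have := le_lt_trans h Hn; rewrite mulrC ltxx.
- exists del => //; exists M => // u v n vu vv ag; split; first exact: upper.
  move=> df.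
  have [_ /(_ n.+1) [z Ez <-]] := pi_spec vu; have [_ /(_ n.+1) [z' Ez' <-]] := pi_spec vv.
  rewrite /= -(comp_agree ag (phi (v n) z')) comp_sim // mulrC.
  apply: ler_pM; [exact: Wge0 | exact: ltW | exact: lexx | exact: Hdel (vu n) (vv n) df Ez Ez'].
Qed.
End Geo.

Lemma W_gt0 {R : realType} (a : seq R) u n : (forall x, x \in a -> 0 < x < 1) ->
  valid (size a) u -> 0 < W a u n.
Proof.
move=> apos vu; apply: prodr_gt0 => i _.
by have /andP [h _] := apos _ (mem_nth 0 (vu i)).
Qed.

Lemma inv_le {R : realType} (K D De : R) : 0 < K -> D <= K * De -> K^-1 * D <= De.
Proof. by move=> K0 h; rewrite ler_pdivrMl. Qed.

Lemma le_inv {R : realType} (C Wa Wb : R) : 0 < C -> C^-1 * Wa <= Wb -> Wa <= C * Wb.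
Proof. by move=> C0 h; rewrite -ler_pdivrMl. Qed.

Lemma le_div {R : realType} (c Wa D : R) : 0 < c -> c * Wa <= D -> Wa <= c^-1 * D.
Proof. by move=> c0 h; rewrite ler_pdivlMl. Qed.

Lemma SymEq_lip {R : realType} (d : nat) (a b : seq R) (E F : set 'rV[R]_d) :
  contraction_vector d a -> contraction_vector d b -> SymEq a b ->
  in_D a E -> in_D b F -> lip_equiv E F.
Proof.
move=> [_ [apos _]] [_ [bpos _]] [h [vh sh [C C0 mh]]].
move=> [phi [hsim [E0 [Ec [EU Edis]]]]] [psi [hsim' [F0 [Fc [FU Fdis]]]]].
have [piE [vE sE [c1 c10 [c2 c20 HE]]]] := geo_coding apos hsim E0 Ec EU Edis.
have [piF [vF sF [c1' c1'0 [c2' c2'0 HF]]]] := geo_coding bpos hsim' F0 Fc FU Fdis.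
have injE : forall u v, valid (size a) u -> valid (size a) v -> piE u = piE v -> u = v.
  move=> u v vu vv e; apply: contrapT => /fun_neq /first_diff [n [ag df]].
  have [_ /(_ df)] := HE u v n vu vv ag; rewrite e edistxx.
  by rewrite leNgt mulr_gt0 // W_gt0.
have injF : forall u v, valid (size b) u -> valid (size b) v -> piF u = piF v -> u = v.
  move=> u v vu vv e; apply: contrapT => /fun_neq /first_diff [n [ag df]].
  have [_ /(_ df)] := HF u v n vu vv ag; rewrite e edistxx.
  by rewrite leNgt mulr_gt0 // W_gt0.
pose inv x := match pselect (exists2 u, valid (size a) u & piE u = x) with
  | left H => let: exist2 u _ _ := cid2 H in u | right _ => fun _ => 0%N end.
have invP : forall x, E x -> valid (size a) (inv x) /\ piE (inv x) = x.
  move=> x Ex; rewrite /inv; case: pselect => [H|H]; first by case: cid2.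
  by case: H; apply: sE.
pose K := c2' * C * c1^-1 + c2 * C * c1'^-1.
have K0 : 0 < K by rewrite addr_gt0 // !mulr_gt0 // invr_gt0.
exists (fun x => piF (h (inv x))); split; [|split; [|split]].
- by move=> x /invP [vx _]; apply: vF; apply: vh.
- move=> x y Ex Ey e; have [vx ex] := invP _ Ex; have [vy ey] := invP _ Ey.
  rewrite -ex -ey; congr piE; apply: (metric_inj mh) => //.
  exact: injF (vh _ vx) (vh _ vy) e.
- move=> y /sF [w vw <-]; have [u vu <-] := sh w vw.
  exists (piE u); first exact: vE.
  have [vi ei] := invP _ (vE _ vu); by rewrite (injE _ _ vi vu ei).
exists K => // x y Ex Ey.
have [vx ex] := invP _ Ex; have [vy ey] := invP _ Ey.
case: (pselect (inv x = inv y)) => [e|ne].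
  have xy : x = y by rewrite -ex -ey e.
  by subst y; rewrite !edistxx !mulr0; split.
have [n [ag df]] := first_diff (fun_neq ne).
have [uE lE] := HE _ _ n vx vy ag; have {}lE := lE df.
have [n' [ag' df' l1 u1]] := mh _ _ n vx vy ag df.
have [uF lF] := HF _ _ n' (vh _ vx) (vh _ vy) ag'; have {}lF := lF df'.
rewrite ex ey in uE lE.
have A0 : 0 <= c2' * C * c1^-1 by rewrite !mulr_ge0 // ?invr_ge0 ltW.
have B0 : 0 <= c2 * C * c1'^-1 by rewrite !mulr_ge0 // ?invr_ge0 ltW.
split.
- apply: inv_le => //.
  apply: (le_trans uE).
  have h1 := le_inv C0 l1; have h2 := le_div c1'0 lF.
  apply: (@le_trans _ _ (c2 * C * c1'^-1 * edist (piF (h (inv x))) (piF (h (inv y))))).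
    rewrite -!mulrA; exact: (ler_wpM2l (ltW c20) (le_trans h1 (ler_wpM2l (ltW C0) h2))).
  by rewrite /K mulrDl lerDr; apply: mulr_ge0 => //; exact: edist_ge0.
- have h3 := le_div c10 lE.
  apply: (le_trans uF); apply: (@le_trans _ _ (c2' * C * c1^-1 * edist x y)).
    rewrite -!mulrA; exact: (ler_wpM2l (ltW c2'0) (le_trans u1 (ler_wpM2l (ltW C0) h3))).
  by rewrite /K mulrDl lerDl; apply: mulr_ge0 => //; exact: edist_ge0.
Qed.

Unset Implicit Arguments.
Set Strict Implicit.

Theorem proposition1p3 (R : realType) (d : nat) (hd : (1 <= d)%N)
  (rho tau : seq R) :
  contraction_vector d rho -> contraction_vector d tau ->
  cv_equiv d rho tau ->
  forall (E F : set 'rV[R]_d), in_D rho E -> in_D tau F -> lip_equiv E F.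
Proof.
move=> cr ct eq E F hE hF.
exact: SymEq_lip cr ct (cv_equiv_SymEq eq) hE hF.
Qed.
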